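(* Let $G$ be a finite non-cyclic abelian $p$-group. Then $\Delta_D(G)=\mathcal{P}_e(G)$ if and only if $G$ is elementary abelian.
   Context: The enhanced power graph $\mathcal{P}_e(G)$ has vertex set $G$ with distinct $x,y$ adjacent iff $\langle x,y\rangle$ is cyclic. The deep commuting graph $\Delta_D(G)$ has vertex set $G$, distinct vertices adjacent iff their preimages commute in a Schur cover $\tilde G$ of $G$ (a central extension $\{e\}\to M(G)\to\tilde G\to G\to\{e\}$ with kernel contained in $Z(\tilde G)\cap[\tilde G,\tilde G]$, of maximal order; $M(G)$ the Schur multiplier). An elementary abelian $p$-group is one in which every non-identity element has order $p$. *)

(* Defs.v *)
From mathcomp Require Import all_boot all_fingroup all_solvable.
Set Implicit Arguments. Unset Strict Implicit. Unset Printing Implicit Defensive.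
Local Open Scope group_scope.

Definition stem_extension (hT gT : finGroupType) (H : {group hT})
    (G : {group gT}) (f : {morphism H >-> gT}) : Prop :=
  f @* H = G /\ 'ker f \subset 'Z(H) :&: H^`(1).

(* A Schur cover: a stem extension whose kernel has maximal order among all
   stem extensions of G (over all finite groups). Its kernel is then M(G). *)
Definition schur_cover (hT gT : finGroupType) (H : {group hT})
    (G : {group gT}) (f : {morphism H >-> gT}) : Prop :=
  stem_extension G f /\
  forall (kT : finGroupType) (K : {group kT}) (g : {morphism K >-> gT}),
    stem_extension G g -> #|'ker g| <= #|'ker f|.

(* Adjacency in the deep commuting graph Delta_D(G) computed in the Schur
   cover f : H ->> G: distinct x, y are adjacent iff their preimages commute. *)
Definition deep_adj (hT gT : finGroupType) (H : {group hT})
    (f : {morphism H >-> gT}) (x y : gT) : Prop :=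
  x != y /\ forall a b, a \in H -> b \in H -> f a = x -> f b = y -> commute a b.

Definition epow_adj (gT : finGroupType) (x y : gT) : Prop :=
  x != y /\ cyclic <<[set x; y]>>.

(* Main.v *)
From HB Require Import structures.
Require Import Defs.
From mathcomp Require Import all_boot all_fingroup all_solvable all_algebra.
From mathcomp Require Import ring zify.
From Stdlib Require Classical_Prop.
Set Implicit Arguments. Unset Strict Implicit. Unset Printing Implicit Defensive.
Import GRing.Theory.
Set Warnings "-notation-overridden -ambiguous-paths -redundant-canonical-projection".


Section Cover.
Variables (p n : nat).
Definition Pr := {t : 'I_n * 'I_n | t.1 < t.2}.
HB.instance Definition _ := Finite.on Pr.
Definition Vt := {ffun 'I_n -> 'Z_p}.
Definition Ct := {ffun Pr -> 'Z_p}.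
Definition W : Type := (Vt * Ct)%type.
HB.instance Definition _ := Finite.on W.
Local Open Scope ring_scope.
Definition bet (v w : Vt) : Ct := [ffun t => v (sval t).1 * w (sval t).2].
Definition mulW (a b : W) : W := (a.1 + b.1, a.2 + b.2 + bet a.1 b.1).
Definition oneW : W := (0, 0).
Definition invW (a : W) : W := (- a.1, - a.2 + bet a.1 a.1).
Lemma mulWA : associative mulW.
Proof.
move=> [a1 a2] [b1 b2] [c1 c2]; rewrite /mulW /=; congr pair; first by rewrite addrA.
apply/ffunP=> t; rewrite !ffunE; ring.
Qed.
Lemma mul1W : left_id oneW mulW.
Proof.
move=> [a1 a2]; rewrite /mulW /=; congr pair; first by rewrite add0r.
apply/ffunP=> t; rewrite !ffunE; ring.
Qed.
Lemma mulVW : left_inverse oneW invW mulW.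
Proof.
move=> [a1 a2]; rewrite /mulW /=; congr pair; first by rewrite addNr.
apply/ffunP=> t; rewrite !ffunE; ring.
Qed.
HB.instance Definition _ := Finite_isGroup.Build W mulWA mul1W mulVW.
Lemma mulWE (a b : W) : (a * b)%g = mulW a b. Proof. by []. Qed.
Lemma oneWE : (1%g : W) = oneW. Proof. by []. Qed.
Lemma invWE (a : W) : (a^-1)%g = invW a. Proof. by []. Qed.

Variables (gT : finGroupType) (e : 'I_n -> gT).
Hypotheses (p_gt1 : (1 < p)%N) (ce : forall i j, commute (e i) (e j))
  (oe : forall i, #[e i]%g = p).

Definition fW (a : W) : gT := (\prod_(i < n) e i ^+ (a.1 i : nat))%g.

Lemma expZp i (x y : 'Z_p) : (e i ^+ ((x + y)%R : 'Z_p) = e i ^+ x * e i ^+ y)%g.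
Proof.
rewrite -expgD -(expg_mod_order (e i) (nat_of_ord x + nat_of_ord y)%N) oe; congr (expgn _ _).
by rewrite -{1}(natr_Zp x) -{1}(natr_Zp y) -natrD val_Zp_nat.
Qed.

Lemma fWM : {in [set: W] &, {morph fW : x y / (x * y)%g}}.
Proof.
move=> a b _ _; rewrite /fW mulWE /mulW /= -prodgM_commute.
  by apply: eq_bigr => i _; rewrite ffunE expZp.
by move=> i j _ _; apply: commuteX2.
Qed.
Canonical fWm := Morphism fWM.
Local Open Scope group_scope.
Hypothesis (G : {group gT}) (dG : \big[dprod/1%g]_(i < n) <[e i]>%g = G).

Definition eps (i : 'I_n) : Vt := [ffun k => (k == i)%:R].
Definition del (t : Pr) : Ct := [ffun u => (u == t)%:R].
Definition mkW (v : Vt) (c : Ct) : W := (v, c).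
Definition Z0 : {set W} := [set mkW 0 c | c : Ct].

Lemma val_natZp (b : bool) : nat_of_ord (b%:R : 'Z_p) = b.
Proof. by rewrite val_Zp_nat // modn_small //; case: b => //=; apply: ltnW. Qed.

Lemma fW_eps i : fW (eps i, 0) = e i.
Proof.
rewrite /fW (eq_bigr (fun j => if j == i then e i else 1%g)) => [|j _].
  by rewrite -big_mkcond big_pred1_eq.
by rewrite /= ffunE val_natZp; case: eqP => [->|].

Qed.

Lemma e_in i : e i \in G.
Proof.
rewrite -(bigdprodWY dG); apply: mem_gen; apply/bigcupP; exists i => //.
exact: cycle_id.
Qed.

Lemma imW : fWm @* [set: W] = G.
Proof.
apply/eqP; rewrite eqEsubset; apply/andP; split.
  apply/subsetP=> _ /morphimP[a _ _ ->]; apply: group_prod => i _.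
  by apply: groupX; apply: e_in.
rewrite -{1}(bigdprodWY dG) gen_subG; apply/bigcupsP=> i _.
by rewrite cycle_subG -fW_eps mem_morphim ?inE.
Qed.

Lemma cardW : #|[set: W]| = (p ^ n * p ^ #|{: Pr}|)%N.
Proof. by rewrite cardsT card_prod !card_ffun !card_ord Zp_cast. Qed.

Lemma cardG : #|G| = (p ^ n)%N.
Proof.
rewrite -(bigdprod_card dG) (eq_bigr (fun _ => p)) => [|i _]; last exact: oe.
by rewrite prod_nat_const card_ord.
Qed.

Lemma cardker : #|'ker fWm| = (p ^ #|{: Pr}|)%N.
Proof.
have := card_morphpre (subxx (fWm @* [set: W])).
rewrite morphimGK ?subsetT // cardW.
rewrite -[#|(_ @* _)%G|]/#|fWm @* [set: W]| imW cardG => /eqP.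
rewrite mulnC eqn_pmul2r ?expn_gt0 ?(ltnW p_gt1) //; by move/eqP.
Qed.

Lemma cardZ0 : #|Z0| = (p ^ #|{: Pr}|)%N.
Proof.
rewrite card_imset; last by move=> c d [].
by rewrite card_ffun card_ord Zp_cast.
Qed.

Lemma Z0_ker : 'ker fWm = Z0.
Proof.
apply/eqP; rewrite eq_sym eqEcard cardZ0 cardker leqnn andbT.
apply/subsetP=> _ /imsetP[c _ ->]; apply/kerP; rewrite ?inE //.
by rewrite /= /fW big1 // => i _; rewrite ffunE.
Qed.
Lemma bet0l w : bet 0 w = 0.
Proof. by apply/ffunP=> t; rewrite !ffunE mul0r. Qed.
Lemma bet0r w : bet w 0 = 0.
Proof. by apply/ffunP=> t; rewrite !ffunE mulr0. Qed.

Lemma Z0_center : Z0 \subset 'Z([set: W]).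
Proof.
apply/subsetP=> _ /imsetP[c _ ->]; apply/centerP; split; rewrite ?inE //.
move=> [b1 b2] _; rewrite /commute !mulWE /mulW /mkW /= bet0l bet0r.
by rewrite add0r !addr0 addrC.
Qed.

Lemma Z0M c d : mkW 0 c * mkW 0 d = mkW 0 (c + d)%R.
Proof. by rewrite mulWE /mulW /mkW /= addr0 bet0l addr0. Qed.

Lemma Z0X c k : mkW 0 c ^+ k = mkW 0 (c *+ k)%R.
Proof.
elim: k => [|k IH]; first by rewrite expg0 mulr0n.
by rewrite expgS IH Z0M mulrS.
Qed.

Lemma Z0sum (F : Pr -> Ct) : mkW 0 (\sum_t F t)%R = \prod_t mkW 0 (F t) :> W.
Proof.
apply: (big_morph (fun c : Ct => mkW 0 c)) => [c d|] //.
by rewrite Z0M.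
Qed.

Lemma commW (v w : Vt) :
  [~ mkW v 0, mkW w 0] = mkW 0 (bet v w - bet w v)%R.
Proof.
rewrite /commg /conjg !mulWE !invWE /mulW /invW /mkW /=; congr pair.
  by rewrite addrCA addKr addNr.
apply/ffunP=> t; rewrite !ffunE; ring.
Qed.

Lemma del_comm t : mkW 0 (del t) = [~ mkW (eps (sval t).1) 0, mkW (eps (sval t).2) 0].
Proof.
rewrite commW /mkW; congr pair; apply/ffunP=> u; rewrite !ffunE.
case: t => [[i j] /= ij]; case: u => [[k l] /= kl].
rewrite -val_eqE /= xpair_eqE.
have -> : ((k == j)%:R * (l == i)%:R = 0 :> 'Z_p)%R.
  case: eqP => [kj|]; case: eqP => [li|]; rewrite ?mulr0 ?mul0r //.
  by subst; move: (ltn_trans ij kl); rewrite ltnn.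
by rewrite subr0; case: (k == i); case: (l == j); rewrite /= ?mulr1 ?mulr0.
Qed.

Lemma Z0_der : Z0 \subset [set: W]^`(1).
Proof.
apply/subsetP=> _ /imsetP[c _ ->].
have -> : c = (\sum_t del t *+ c t)%R.
  apply/ffunP=> u; rewrite sum_ffunE (bigD1 u) //= big1 => [|t tu].
    by rewrite !ffunMnE ffunE eqxx addr0 natr_Zp.
  by rewrite ffunMnE ffunE eq_sym (negbTE tu) mul0rn.
rewrite Z0sum; apply: group_prod => t _; rewrite -Z0X; apply: groupX.
by rewrite del_comm; apply: mem_commg; rewrite ?inE.
Qed.

Lemma W_stem : stem_extension G fWm /\ #|'ker fWm| = (p ^ #|{: Pr}|)%N.
Proof.
split; last exact: cardker.
split; first exact: imW.
by rewrite Z0_ker subsetI Z0_center Z0_der.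
Qed.
End Cover.
Local Open Scope group_scope.

Lemma card_gen_le (gT : finGroupType) (A : {set gT}) m :
  abelian A -> (forall a, a \in A -> a ^+ m = 1) -> 0 < m ->
  #|<<A>>| <= m ^ #|A|.
Proof.
move=> cAA Am m_gt0; have [k leAk] := ubnP #|A|.
elim: k A leAk cAA Am => // k IH A leAk cAA Am.
have [/eqP-> | /set0Pn[a aA]] := boolP (A == set0); first by rewrite gen0 cards1 cards0.
set B := A :\ a.
have defA : A = a |: B by rewrite setD1K.
have cBB : abelian B by apply: abelianS cAA; apply: subD1set.
have IHB : #|<<B>>| <= m ^ #|B|.
  apply: IH => //; first by rewrite (cardsD1 a A) aA in leAk.
  by move=> b /setD1P[_ /Am].
have cA : abelian <<A>> by rewrite abelian_gen.
have sAa : <[a]> \subset <<A>> by rewrite cycle_subG mem_gen.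
have sBA : <<B>> \subset <<A>> by apply: genS; apply: subD1set.
have eA : <<A>> = <[a]> <*> <<B>>.
  by rewrite {1}defA -[<[a]>]/(<<[set a]>>) joing_idl joing_idr.
rewrite eA cent_joinEr; last exact: (centSS sBA sAa cA).
rewrite (cardsD1 a A) aA expnS.
have := mul_cardG <[a]> <<B>>; set u := #|_ :&: _| => e.
have u_gt0 : 0 < u by rewrite cardG_gt0.
apply: leq_trans (_ : #|<[a]>| * #|<<B>>| <= _).
  by rewrite e leq_pmulr.
apply: leq_mul => //; apply: dvdn_leq => //; rewrite order_dvdn; apply/eqP.
exact: Am.
Qed.

Section Stem.
Variables (hT gT : finGroupType) (H : {group hT}) (G : {group gT}).
Variable f : {morphism H >-> gT}.
Hypothesis st : stem_extension G f.

Lemma ker_center : 'ker f \subset 'Z(H).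
Proof. by case: st => _; rewrite subsetI => /andP[]. Qed.

Lemma stem_pre a c : a \in H -> c \in H -> f a = f c -> exists2 k, k \in 'Z(H) & a = c * k.
Proof.
move=> aH cH fac; exists (c^-1 * a); last by rewrite mulKVg.
apply: (subsetP ker_center); apply/kerP; first by rewrite groupM ?groupV.
by rewrite morphM ?groupV // morphV // fac mulVg.
Qed.

Definition pre (u : gT) : hT := odflt 1 [pick a in H | f a == u].

Lemma preP u : u \in G -> pre u \in H /\ f (pre u) = u.
Proof.
case: st => imH _; rewrite -imH => /morphimP[a _ aH ->].
rewrite /pre; case: pickP => [b /andP[bH /eqP]|] //=.
by move/(_ a); rewrite aH eqxx.
Qed.

Lemma comm_centl a b k : k \in 'Z(H) -> a \in H -> b \in H -> [~ a * k, b] = [~ a, b].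
Proof.
move=> /centerP[kH ck] aH bH; rewrite commMgJ.
have -> : [~ k, b] = 1 by apply/eqP/commgP; apply: ck.
rewrite mulg1; apply/conjg_fixP/commgP/commute_sym; apply: ck.
by rewrite groupR.
Qed.

Lemma comm_centr a b k : k \in 'Z(H) -> a \in H -> b \in H -> [~ a, b * k] = [~ a, b].
Proof.
move=> /centerP[kH ck] aH bH; rewrite commgMJ.
have -> : [~ a, k] = 1 by apply/eqP/commgP/commute_sym; apply: ck.
rewrite mul1g; apply/conjg_fixP/commgP/commute_sym; apply: ck.
by rewrite groupR.
Qed.

Hypothesis cGG : abelian G.

Lemma der_ker : H^`(1) \subset 'ker f.
Proof.
case: st => imH _.
have : f @* H^`(1) = 1 by rewrite morphim_der // imH derg1; apply/commG1P.
move/eqP; rewrite -subG1 sub_morphim_pre ?der_sub //.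
Qed.

Lemma der_center : H^`(1) \subset 'Z(H).
Proof. exact: subset_trans der_ker ker_center. Qed.

Lemma stem_in_der : 'ker f \subset H^`(1).
Proof. by case: st => _; rewrite subsetI => /andP[]. Qed.

Lemma imG : f @* H = G. Proof. by case: st. Qed.

Lemma fG a : a \in H -> f a \in G.
Proof. by move=> aH; rewrite -imG mem_morphim. Qed.

Lemma central_comm a b : a \in 'Z(H) -> b \in H -> [~ a, b] = 1 /\ [~ b, a] = 1.
Proof.
move=> /centerP[aH ca] bH; split; apply/eqP/commgP; last apply: commute_sym; exact: ca.
Qed.

Lemma XG_ker b : b \in H -> b ^+ #|G| \in 'ker f.
Proof.
move=> bH; apply/kerP; first exact: groupX.
by rewrite morphX // expg_cardG // fG.
Qed.

Lemma stem_bound : #|'ker f| <= #|G| ^ (#|G| * #|G|).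
Proof.
apply: leq_trans (subset_leq_card stem_in_der) _.
have sAD : commg_set H H \subset H^`(1) by apply: subset_gen.
have sAZ : commg_set H H \subset 'Z(H) by apply: subset_trans sAD der_center.
apply: leq_trans (card_gen_le (m := #|G|) _ _ _) _.
- apply: (subset_trans sAZ); apply: (subset_trans (subsetIr _ _)).
  by apply: centS; apply: (subset_trans sAZ (center_sub _)).
- move=> _ /imset2P[x y xH yH ->].
  have cy : commute y [~ x, y].
    have /centerP[_ cz] : [~ x, y] \in 'Z(H) by apply: (subsetP der_center); rewrite mem_commg.
    exact/commute_sym/cz.
  rewrite -commgX //; apply: (central_comm _ xH).2.
  exact: (subsetP ker_center) (XG_ker yH).
- exact: cardG_gt0.
apply: leq_pexp2l; first exact: cardG_gt0.
rewrite -cardsX.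
apply: (@leq_trans #|[set [~ pre u.1, pre u.2] | u in setX G G]|); last first.
  exact: leq_imset_card.
apply: subset_leq_card; apply/subsetP=> _ /imset2P[x y xH yH ->].
apply/imsetP; exists (f x, f y); first by rewrite inE /= !fG.
have [px fx] := preP (fG xH); have [py fy] := preP (fG yH).
have [k1 k1Z e1] := stem_pre xH px (esym fx).
have [k2 k2Z e2] := stem_pre yH py (esym fy).
have k2H : k2 \in H by apply: (subsetP (center_sub _)).
rewrite /= {1}e1 {1}e2 comm_centl ?groupM //.
exact: comm_centr.
Qed.
End Stem.

Lemma max_exists (P : nat -> Prop) B :
  (forall m, P m -> m <= B) -> (exists m, P m) ->
  exists n, P n /\ forall m, P m -> m <= n.
Proof.
elim: B => [|B IH] bnd [m Pm].
  by exists m; split => // k /bnd h; apply: leq_trans h _.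
have [PB | nPB] := Classical_Prop.classic (P B.+1).
  by exists B.+1; split.
apply: IH; last by exists m.
move=> k Pk; have := bnd k Pk; rewrite leq_eqVlt ltnS => /orP[/eqP Ek|//].
by rewrite Ek in Pk.
Qed.

Lemma schur_exists (gT : finGroupType) (G : {group gT}) : abelian G ->
  exists (hT : finGroupType) (H : {group hT}) (f : {morphism H >-> gT}),
    schur_cover G f.
Proof.
move=> cGG.
pose P m := exists (hT : finGroupType) (H : {group hT}) (f : {morphism H >-> gT}),
    stem_extension G f /\ #|'ker f| = m.
have [n [[hT [H [f [stf kf]]]] maxn]] : exists n, P n /\ forall m, P m -> m <= n.
  apply: (@max_exists P (#|G| ^ (#|G| * #|G|))).
    by move=> m [hT [H [f [stf <-]]]]; apply: stem_bound.
  exists 1%N, gT, G, [morphism of idm G]; split; last by rewrite ker_idm cards1.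
  by split; [rewrite morphim_idm | rewrite ker_idm sub1G].
exists hT, H, f; split => // kT K g stg; rewrite kf; apply: maxn.
by exists kT, K, g.
Qed.

Lemma epow_deep (hT gT : finGroupType) (H : {group hT}) (G : {group gT})
  (f : {morphism H >-> gT}) : stem_extension G f ->
  forall x y, x \in G -> y \in G -> epow_adj x y -> deep_adj f x y.
Proof.
move=> st x y xG yG [nxy cyc]; split => // a b aH bH fa fb.
have [g Eg] := cyclicP cyc.
have xg : x \in <[g]> by rewrite -Eg mem_gen // !inE eqxx.
have yg : y \in <[g]> by rewrite -Eg mem_gen // !inE eqxx orbT.
have gG : g \in G.
  have : <[g]> \subset G.
    by rewrite -Eg gen_subG; apply/subsetP => z /set2P[]->.
  by move/subsetP; apply; apply: cycle_id.
have [i xi] := cycleP _ _ xg; have [j yj] := cycleP _ _ yg.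
have [cH fc] := preP st gG; set c := pre f g in cH fc.
have e1 : f a = f (c ^+ i) by rewrite fa morphX // fc xi.
have e2 : f b = f (c ^+ j) by rewrite fb morphX // fc yj.
have [k1 /centerP[k1H ck1] ->] := stem_pre st aH (groupX i cH) e1.
have [k2 /centerP[k2H ck2] ->] := stem_pre st bH (groupX j cH) e2.
have cij : commute (c ^+ i) (c ^+ j) by apply: commuteX2.
apply: commuteM.
  apply: commute_sym; apply: commuteM; first exact: commute_sym.
  by apply: commute_sym; apply: ck1; rewrite groupX.
apply: commute_sym; apply: commuteM; first by apply: ck2; rewrite groupX.
exact: ck2.
Qed.

Lemma nonabelem_bad (hT gT : finGroupType) (H : {group hT}) (G : {group gT})
  (f : {morphism H >-> gT}) p :
  prime p -> p.-group G -> abelian G -> ~~ cyclic G -> ~~ p.-abelem G ->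
  stem_extension G f ->
  exists x y, [/\ x \in G, y \in G, deep_adj f x y & ~ epow_adj x y].
Proof.
move=> pr pG cGG ncG nab st.
rewrite abelemE // cGG /= in nab.
have /exists_inP[g gG gp] : [exists g in G, g ^+ p != 1].
  apply: contraR nab => /exists_inPn h; apply/exponentP => u uG.
  by apply/eqP; move: (h u uG); rewrite negbK.
set x := g ^+ p.
have xG : x \in G by rewrite groupX.
have [z zx oz] : {z | z \in <[x]> & #[z] = p}.
  apply: Cauchy => //.
  have pX : p.-group <[x]> by apply: pgroupS pG; rewrite cycle_subG.
  have ntX : <[x]> :!=: 1 by rewrite cycle_eq1.
  by have [] := pgroup_pdiv pX ntX.
have [E /pnElemP[sEG abE logE]] : exists E, E \in 'E_p^2(G).
  apply/p_rank_geP; rewrite -(rank_pgroup pG) ltnNge -abelian_rank1_cyclic //.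
have /subsetPn[y yE ygn] : ~~ (E \subset <[g]>).
  apply/negP => sEg.
  have cE : cyclic E by apply: cyclicS sEg (cycle_cyclic g).
  move: cE; rewrite abelian_rank1_cyclic ?(abelem_abelian abE) //.
  by rewrite (rank_pgroup (abelem_pgroup abE)) p_rank_abelem // logE.
have yG : y \in G by apply: (subsetP sEG).
have yp : y ^+ p = 1.
  by have /and3P[_ _ /exponentP] := abE; apply.
have ny1 : y != 1 by apply: contraNneq ygn => ->; apply: group1.
have oy : #[y] = p.
  by apply/(prime_nt_dvdP pr); rewrite ?order_eq1 // order_dvdn yp.
have ncN : ~~ cyclic <<[set x; y]>>.
  apply/negP => cN.
  have sZ : <[z]> \subset <<[set x; y]>>.
    rewrite cycle_subG; apply: (subsetP _ z zx); rewrite cycle_subG.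
    by rewrite mem_gen // !inE eqxx.
  have sY : <[y]> \subset <<[set x; y]>>.
    by rewrite cycle_subG mem_gen // !inE eqxx orbT.
  have := eq_subG_cyclic cN sY sZ; rewrite -!orderE oy oz eqxx => /eqP eYZ.
  have sxg : <[x]> \subset <[g]> by rewrite cycle_subG mem_cycle.
  have szg : <[z]> \subset <[g]> by apply: subset_trans sxg; rewrite cycle_subG.
  have : y \in <[z]> by rewrite -eYZ cycle_id.
  by move/(subsetP szg); rewrite (negbTE ygn).
exists x, y; split => //; last by case=> _ cN; rewrite cN in ncN.
split.
  apply: contraNneq ncN => exy; rewrite -exy setUid.
  exact: cycle_cyclic.
move=> a b aH bH fa fb.
have [cH fc] := preP st gG; set c := pre f g in cH fc.
have e1 : f a = f (c ^+ p) by rewrite fa morphX // fc.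
have [k kZ ->] := stem_pre st aH (groupX p cH) e1.
apply/commgP; rewrite (comm_centl kZ) ?groupX //.
have cbZ : [~ c, b] \in 'Z(H) by apply: (subsetP (der_center st cGG)); rewrite mem_commg.
have /centerP[_ ccb] := cbZ.
rewrite commXg; last by apply: commute_sym; apply: ccb.
rewrite -commgX; last by apply: commute_sym; apply: ccb.
have bpK : b ^+ p \in 'ker f by apply/kerP; rewrite ?groupX // morphX // fb yp.
by rewrite (central_comm (subsetP (ker_center st) _ bpK) cH).2.
Qed.

Lemma gen2_cyc (gT : finGroupType) (x y : gT) : y \in <[x]> -> <<[set x; y]>> = <[x]>.
Proof.
move=> yx; apply/eqP; rewrite eqEsubset gen_subG cycle_subG mem_gen ?set21 // andbT.
by apply/subsetP=> z /set2P[]->; rewrite ?cycle_id.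
Qed.

Definition o1 n : 'I_n.+2 := @Ordinal n.+2 1 (erefl true).

Lemma basis_ex (gT : finGroupType) (G : {group gT}) p x y :
  prime p -> p.-abelem G -> x \in G -> y \in G -> ~~ cyclic <<[set x; y]>> ->
  exists n (e : 'I_n.+2 -> gT),
    [/\ e ord0 = x, e (o1 n) = y, \big[dprod/1]_(i < n.+2) <[e i]> = G
      & forall i, #[e i] = p].
Proof.
move=> pr abG xG yG ncN.
have cGG := abelem_abelian abG.
have ynx : y \notin <[x]>.
  by apply: contra ncN => yx; rewrite gen2_cyc // cycle_cyclic.
have xny : x \notin <[y]>.
  by apply: contra ncN => xy; rewrite setUC gen2_cyc // cycle_cyclic.
have nx1 : x != 1 by apply: contraNneq xny => ->; apply: group1.
have ox : #[x] = p by apply: abelem_order_p abG xG nx1.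
have tiXY : <[x]> :&: <[y]> = 1.
  by apply: prime_TIg; rewrite /= ?cycle_subG // -orderE ox.
have cXY : <[y]> \subset 'C(<[x]>).
  by apply: (centSS _ _ cGG); rewrite cycle_subG.
pose E := (<[x]> <*> <[y]>)%G.
have dXY : <[x]> \x <[y]> = E by rewrite dprodE // /E /= cent_joinEr.
have sEG : E \subset G by rewrite /E /= join_subG !cycle_subG xG yG.
have [C dEC] := abelem_split_dprod abG sEG.
have sCG : C \subset G by rewrite -(dprodW dEC) mulG_subr.
have abC : p.-abelem C := abelemS sCG abG.
have [b dC ob] := abelian_structure (abelem_abelian abC).
exists (size b), (fun i => nth 1 (x :: y :: b) i); split => //.
  have h : \big[dprod/1]_(z <- x :: y :: b) <[z]> = G.
    by rewrite !big_cons dC dprodA dXY.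
  by rewrite (big_nth 1) big_mkord in h.
move=> i; have : nth 1 (x :: y :: b) i \in x :: y :: b by apply: mem_nth.
set z := nth _ _ _; rewrite !inE => /or3P[/eqP->|/eqP->|zb] //.
  apply: abelem_order_p abG yG _.
  by apply: contraNneq ynx => ->; apply: group1.
have zC : z \in C.
  rewrite -(bigdprodWY dC) bigcup_seq; apply: mem_gen; apply/bigcupP; exists z => //.
  exact: cycle_id.
apply: abelem_order_p abC zC _.
have := abelian_type_gt1 C; rewrite -ob => /allP/(_ #[z]).
rewrite map_f // => /(_ isT) /=; rewrite ltnNge; apply: contra => /eqP->.
by rewrite order1.
Qed.

Section Count.
Variables (hT gT : finGroupType) (H : {group hT}) (G : {group gT}).
Variable f : {morphism H >-> gT}.
Variables (p n : nat) (e : 'I_n -> gT) (t0 : Pr n).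
Hypotheses (pr : prime p) (st : stem_extension G f) (cGG : abelian G)
  (dG : \big[dprod/1]_(i < n) <[e i]> = G) (ep : forall i, e i ^+ p = 1)
  (cm : forall a b, a \in H -> b \in H -> f a = e (sval t0).1 -> f b = e (sval t0).2 ->
        commute a b).

Let prf i := pre f (e i).
Let eG i : e i \in G := e_in dG i.
Let prH i : prf i \in H := (preP st (eG i)).1.
Let fpr i : f (prf i) = e i := (preP st (eG i)).2.
Let S := [set prf i | i : 'I_n].
Let A := <<S>>.
Let Cs := [set [~ prf (sval t).1, prf (sval t).2] | t : Pr n].
Let L := <<Cs>>.

Lemma sCsZ : Cs \subset 'Z(H).
Proof.
apply/subsetP=> _ /imsetP[t _ ->]; apply: (subsetP (der_center st cGG)).
by rewrite mem_commg.
Qed.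

Lemma sLZ : L \subset 'Z(H).
Proof. by rewrite gen_subG sCsZ. Qed.

Lemma sSH : S \subset H.
Proof. by apply/subsetP=> _ /imsetP[i _ ->]. Qed.

Lemma nLH : H \subset 'N(L).
Proof.
apply: cents_norm; rewrite centsC; apply: subset_trans sLZ _.
exact: subsetIr.
Qed.

Lemma commL i j : [~ prf i, prf j] \in L.
Proof.
case: (ltngtP i j) => [ij|ji|/val_inj ->].
- by apply: mem_gen; apply/imsetP; exists (exist _ (i, j) ij).
- rewrite -invg_comm groupV.
  by apply: mem_gen; apply/imsetP; exists (exist _ (j, i) ji).
- by rewrite commgg group1.
Qed.

Lemma sAH : A \subset H.
Proof. by rewrite gen_subG sSH. Qed.

Lemma derA : A^`(1) \subset L.
Proof.
apply: der1_min; first exact: subset_trans sAH nLH.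
rewrite /A quotient_gen ?(subset_trans sSH nLH) // abelian_gen.
apply/centsP => _ /morphimP[u uN uS ->] _ /morphimP[v vN vS ->].
move: uS vS uN vN => /imsetP[i _ ->] /imsetP[j _ ->] uN vN.
apply/commgP; rewrite -(morphR _ uN vN); apply/eqP; apply: coset_id.
exact: commL.
Qed.

Lemma derH : H^`(1) \subset L.
Proof.
have GA : G \subset f @* A.
  rewrite -(bigdprodWY dG) gen_subG; apply/bigcupsP => i _; rewrite cycle_subG -fpr.
  by apply: mem_morphim => //; rewrite mem_gen //; apply: imset_f.
have decH h : h \in H -> exists2 a, a \in A & exists2 k, k \in 'Z(H) & h = a * k.
  move=> hH; have /morphimP[a aH aA fa] := subsetP GA _ (fG st hH).
  by have [k kZ ->] := stem_pre st hH aH fa; exists a => //; exists k.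
rewrite derg1 gen_subG; apply/subsetP => _ /imset2P[h1 h2 h1H h2H ->].
have [a1 a1A [k1 k1Z e1]] := decH _ h1H.
have [a2 a2A [k2 k2Z e2]] := decH _ h2H.
have a1H : a1 \in H := subsetP sAH _ a1A.
have a2H : a2 \in H := subsetP sAH _ a2A.
have k2H : k2 \in H by apply: (subsetP (center_sub _)).
rewrite e1 e2 (comm_centl k1Z a1H (groupM a2H k2H)) (comm_centr k2Z a1H a2H).
by apply: (subsetP derA); rewrite mem_commg.
Qed.

Lemma Cs1 : 1 \in Cs.
Proof.
apply/imsetP; exists t0 => //; apply/esym/eqP/commgP; apply: cm; rewrite ?prH ?fpr //.
Qed.

Lemma cardL : #|L| <= p ^ (#|{: Pr n}| - 1).
Proof.
have e1 : <<Cs :\ 1>> = L by apply: genD1; apply: group1.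
have sX : Cs :\ 1 \subset 'Z(H) by apply: subset_trans (subsetDl _ _) sCsZ.
rewrite -e1; apply: leq_trans (card_gen_le (m := p) _ _ _) _.
- apply: (subset_trans sX); apply: (subset_trans (subsetIr _ _)).
  by apply: centS; apply: (subset_trans sX (center_sub _)).
- move=> _ /setD1P[_ /imsetP[t _ ->]].
  have tCs : [~ prf (sval t).1, prf (sval t).2] \in Cs by apply/imsetP; exists t.
  have /centerP[_ cz] := subsetP sCsZ _ tCs.
  rewrite -commgX; last by apply: commute_sym; apply: cz.
  have pK : prf (sval t).2 ^+ p \in 'ker f.
    by apply/kerP; rewrite ?groupX // morphX // fpr ep.
  exact: (central_comm (subsetP (ker_center st) _ pK) (prH _)).2.
- exact: prime_gt0.
apply: leq_pexp2l; first exact: prime_gt0.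
have h1 : #|Cs| <= #|{: Pr n}| by apply: leq_imset_card.
have h2 := cardsD1 1 Cs; rewrite Cs1 /= in h2.
move: h1; rewrite h2 add1n => h1; rewrite subn1 -ltnS; apply: leq_trans h1 _; exact: leqSpred.
Qed.

Lemma count_bound : #|'ker f| <= p ^ (#|{: Pr n}| - 1).
Proof.
exact: leq_trans (subset_leq_card (subset_trans (stem_in_der st) derH)) cardL.
Qed.
End Count.

Theorem theorem4p1 (gT : finGroupType) (G : {group gT}) (p : nat) :
  prime p -> p.-group G -> abelian G -> ~~ cyclic G ->
  ((forall (hT : finGroupType) (H : {group hT}) (f : {morphism H >-> gT}),
      schur_cover G f ->
      forall x y, x \in G -> y \in G -> (deep_adj f x y <-> epow_adj x y))
   <-> p.-abelem G).
Proof.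
move=> pr pG cGG ncG; split.
  move=> hyp; apply: contraT => nab; exfalso.
  have [hT [H [f sc]]] := schur_exists cGG.
  have [x [y [xG yG dxy nexy]]] := nonabelem_bad pr pG cGG ncG nab sc.1.
  by apply: nexy; apply/(hyp _ _ _ sc x y xG yG).
move=> abG hT H f sc x y xG yG; split; last exact: epow_deep sc.1 x y xG yG.
move=> dxy; split; first by case: dxy.
apply: contraT => ncN; exfalso.
have [n [e [e0 e1 dG oe]]] := basis_ex pr abG xG yG ncN.
pose t0 : Pr n.+2 := exist _ (ord0, o1 n) (erefl true).
have ep i : e i ^+ p = 1 by rewrite -(oe i) expg_order.
have cm : forall a b, a \in H -> b \in H -> f a = e (sval t0).1 -> f b = e (sval t0).2 ->
    commute a b.
  move=> a b aH bH fa fb; case: dxy => _; apply => //.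
    by rewrite fa /= e0.
  by rewrite fb /= e1.
have ub := count_bound pr sc.1 cGG dG ep cm.
have ce i j : commute (e i) (e j).
  exact: (centsP cGG) _ (e_in dG i) _ (e_in dG j).
have [stW kW] := W_stem (prime_gt1 pr) ce oe dG.
have lb := sc.2 _ _ _ stW; rewrite kW in lb.
have m_gt0 : 0 < #|{: Pr n.+2}| by apply/card_gt0P; exists t0.
have := leq_trans lb ub; rewrite leq_exp2l ?prime_gt1 //.
lia.
Qed.
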